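(* Let $n\ge2$, $\kappa\ge1$ and $G\in\mathcal G_{[n;\kappa]}$ with structure vector $V_G\in\mathbb R^{n\kappa^n}$. Then $G$ is skew-symmetric if and only if $$V_G=V_G\left(P_\sigma\otimes \mathrm{sgn}(\sigma)T_\sigma\right)\quad\text{for all }\sigma\in\mathbf S_n.$$
   Context: $\delta_m^j$ is the $j$-th column of $I_m$, $\mathbf 1_m$ the all-ones column vector of length $m$. For $\sigma\in\mathbf S_n$, $P_\sigma=[\delta_n^{\sigma(1)},\dots,\delta_n^{\sigma(n)}]\in\mathbb R^{n\times n}$. For $i=1,\dots,n$, $\Phi_i=\mathbf 1_{\kappa^{i-1}}^T\otimes I_\kappa\otimes\mathbf 1_{\kappa^{n-i}}^T\in\mathbb R^{\kappa\times\kappa^n}$. The Khatri–Rao product of $A\in\mathbb R^{p\times m}$ and $B\in\mathbb R^{q\times m}$ is $A*B=[\mathrm{Col}_1(A)\otimes\mathrm{Col}_1(B),\dots,\mathrm{Col}_m(A)\otimes\mathrm{Col}_m(B)]$, and $T_\sigma=\Phi_{\sigma^{-1}(1)}*\cdots*\Phi_{\sigma^{-1}(n)}\in\mathbb R^{\kappa^n\times\kappa^n}$. A finite game $G\in\mathcal G_{[n;\kappa]}$ has players $\{1,\dots,n\}$, each with strategy set $\{1,\dots,\kappa\}$, strategy $j$ identified with $\delta_\kappa^j$, and payoffs $c_i$; $V_i^c\in\mathbb R^{\kappa^n}$ is the unique row vector with $c_i(x_1,\dots,x_n)=V_i^c(x_1\otimes\cdots\otimes x_n)$, and $V_G=[V_1^c,\dots,V_n^c]$.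 $G$ is skew-symmetric if for every $\sigma\in\mathbf S_n$, every $i$ and every profile, $c_i(x_1,\dots,x_n)=\mathrm{sgn}(\sigma)\,c_{\sigma(i)}(x_{\sigma^{-1}(1)},\dots,x_{\sigma^{-1}(n)})$. *)

(* Defs.v *)
From mathcomp Require Import all_boot all_order all_algebra.
From mathcomp Require Import fingroup perm.
Set Implicit Arguments. Unset Strict Implicit. Unset Printing Implicit Defensive.
Import GRing.Theory Num.Theory.
Local Open Scope ring_scope.

(* Conventions: indices are 0-based.  Strategy j : 'I_k of a player is
   identified with delta_k^j (the j-th column of I_k).  Kronecker products use
   the standard convention: index (a, b) of A (x) B (A with m2 rows/cols in B)
   is a * m2 + b. *)

Lemma divord_proof m1 m2 (r : 'I_(m1 * m2)) : (r %/ m2 < m1)%N.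
Proof.
case: m2 r => [|m2] r; first by case: r => r; rewrite muln0.
by rewrite ltn_divLR.
Qed.

Lemma modord_proof m1 m2 (r : 'I_(m1 * m2)) : (r %% m2 < m2)%N.
Proof.
case: m2 r => [|m2] r; first by case: r => r; rewrite muln0.
by rewrite ltn_pmod.
Qed.

Definition divord m1 m2 (r : 'I_(m1 * m2)) : 'I_m1 := Ordinal (divord_proof r).
Definition modord m1 m2 (r : 'I_(m1 * m2)) : 'I_m2 := Ordinal (modord_proof r).

Definition kron (R : pzRingType) m1 n1 m2 n2 (A : 'M[R]_(m1, n1)) (B : 'M[R]_(m2, n2))
  : 'M[R]_(m1 * m2, n1 * n2) :=
  \matrix_(r, s) (A (divord r) (divord s) * B (modord r) (modord s)).

Definition khatri_rao (R : pzRingType) p q m (A : 'M[R]_(p, m)) (B : 'M[R]_(q, m))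
  : 'M[R]_(p * q, m) :=
  \matrix_(r, j) (A (divord r) j * B (modord r) j).

Fixpoint khatri_rao_big (R : pzRingType) k c N : ('I_N -> 'M[R]_(k, c)) -> 'M[R]_(k ^ N, c) :=
  match N with
  | 0 => fun _ => const_mx 1
  | N'.+1 => fun F =>
      castmx (esym (expnS k N'), erefl c)
        (khatri_rao (F ord0) (khatri_rao_big (fun i => F (lift ord0 i))))
  end.

Definition ones (R : pzRingType) m : 'cV[R]_m := const_mx 1.
Definition delta (R : pzRingType) m (j : 'I_m) : 'cV[R]_m := \col_r (r == j)%:R.

Definition Pmat (R : pzRingType) n (s : 'S_n) : 'M[R]_n :=
  \matrix_(i, j) (i == s j)%:R.

Lemma Phi_rows k : (1 * k * 1 = k)%N.
Proof. by rewrite mul1n muln1. Qed.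

Lemma Phi_cols n k (i : 'I_n) : (k ^ i * k * k ^ (n - i.+1) = k ^ n)%N.
Proof. by rewrite -expnSr -expnD subnKC // ltn_ord. Qed.

(* Phi_i = 1_{k^(i-1)}^T (x) I_k (x) 1_{k^(n-i)}^T   (here i is 0-based) *)
Definition Phi (R : pzRingType) n k (i : 'I_n) : 'M[R]_(k, k ^ n) :=
  castmx (Phi_rows k, Phi_cols k i)
    (kron (kron (ones R (k ^ i))^T (1%:M : 'M[R]_k)) (ones R (k ^ (n - i.+1)))^T).

Definition Tmat (R : pzRingType) n k (s : 'S_n) : 'M[R]_(k ^ n) :=
  khatri_rao_big (fun j : 'I_n => Phi R k (s^-1%g j)).

Definition sgn (R : pzRingType) n (s : 'S_n) : R := (-1) ^+ odd_perm s.

(* A game in G_[n;k]: payoff c i x of player i at profile x (x j = strategy of j). *)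
Definition profile n k := {ffun 'I_n -> 'I_k}.
Definition game (R : Type) n k := 'I_n -> profile n k -> R.

Definition kron_profile (R : pzRingType) n k (x : profile n k) : 'cV[R]_(k ^ n) :=
  khatri_rao_big (fun j => delta R (x j)).

(* V_i^c: the row vector with c_i(x) = V_i^c (x_1 (x) ... (x) x_n)
   (the kron_profile x are exactly the standard basis vectors of R^(k^n)). *)
Definition Vi (R : pzRingType) n k (c : game R n k) (i : 'I_n) : 'rV[R]_(k ^ n) :=
  \sum_(x : profile n k) c i x *: (kron_profile R x)^T.

Definition VG (R : pzRingType) n k (c : game R n k) : 'rV[R]_(n * k ^ n) :=
  \row_r (Vi c (divord r)) 0 (modord r).

Definition perm_profile n k (s : 'S_n) (x : profile n k) : profile n k :=
  [ffun j => x (s^-1%g j)].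

Definition skew_symmetric (R : pzRingType) n k (c : game R n k) : Prop :=
  forall (s : 'S_n) (i : 'I_n) (x : profile n k),
    c i x = sgn R s * c (s i) (perm_profile s x).

(* Main.v *)
Require Import Defs.
From mathcomp Require Import all_boot all_order all_algebra.
From mathcomp Require Import fingroup perm.
Import GRing.Theory Num.Theory.
Local Open Scope ring_scope.
Set Implicit Arguments. Unset Strict Implicit. Unset Printing Implicit Defensive.

Definition dec k N (r : 'I_(k.+1 ^ N)) : profile N k.+1 :=
  [ffun i : 'I_N => Ordinal (ltn_pmod (r %/ k.+1 ^ (N - i.+1)) (ltn0Sn k))].

Lemma digit_mod K N e r : (0 < K)%N -> (e < N)%N ->
  ((r %% K ^ N) %/ K ^ e %% K = r %/ K ^ e %% K)%N.
Proof.
move=> K0 eN.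
have Ke : (0 < K ^ e)%N by rewrite expn_gt0 K0.
set q := (r %/ K ^ N)%N; set x := (r %% K ^ N)%N.
have -> : r = (q * K ^ (N - e).-1 * K * K ^ e + x)%N.
  rewrite /q /x -(mulnA q) -expnSr prednK ?subn_gt0 // -mulnA -expnD subnK ?(ltnW eN) //.
  exact: divn_eq.
rewrite divnMDl // modnMDl //.
Qed.

Lemma KRentry (R : pzRingType) k c N (F : 'I_N -> 'M[R]_(k.+1, c)) r j :
  khatri_rao_big F r j = \prod_(i < N) F i (dec r i) j.
Proof.
elim: N F r => [|N IH] F r /=; first by rewrite big_ord0 mxE.

rewrite castmxE /khatri_rao mxE. rewrite /= cast_ord_id IH big_ord_recl /=; congr (_ * _).
  congr (F _ _ j); apply/val_inj; rewrite /= ffunE /= subn1 /= modn_small //.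
  by rewrite ltn_divLR ?expn_gt0 // -expnS.
apply: eq_bigr => i _; congr (F _ _ j); apply/val_inj.
rewrite /= !ffunE /=. rewrite /bump leq0n add1n subSS digit_mod //.
by rewrite ltn_subrL ltn0Sn /=; case: N i {IH F r} => [[]|].
Qed.

Lemma lt_subo N (i : 'I_N) : (N - i.+1 < N)%N.
Proof. by rewrite ltn_subrL ltn0Sn /=; case: N i => [[]|]. Qed.

Lemma dec_inj k N : injective (@dec k N).
Proof.
elim: N => [|N IH] r r' E.
  apply/val_inj; case: r r' E => a Ha [b Hb] _ /=; move: Ha Hb.
  by rewrite expn0 !ltnS !leqn0 => /eqP-> /eqP->.
have h0 : (r %/ k.+1 ^ N = r' %/ k.+1 ^ N)%N.
  have := congr1 (fun f : profile _ _ => val (f ord0)) E.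
  by rewrite /= !ffunE /= subn1 /= !modn_small // ltn_divLR ?expn_gt0 // -expnS.
have Kp : (0 < k.+1 ^ N)%N by rewrite expn_gt0.
have h1 : (r %% k.+1 ^ N = r' %% k.+1 ^ N)%N.
  have := IH (Ordinal (ltn_pmod r Kp)) (Ordinal (ltn_pmod r' Kp)).
  move=> /(_ _)/(congr1 val) /=; apply; apply/ffunP => i; apply/val_inj.
  rewrite !ffunE /= !digit_mod ?lt_subo //.
  have := congr1 (fun f : profile _ _ => val (f (lift ord0 i))) E.
  by rewrite /= !ffunE /= /bump leq0n add1n subSS.
by apply/val_inj; rewrite /= (divn_eq r (k.+1 ^ N)) (divn_eq r' (k.+1 ^ N)) h0 h1.
Qed.

Lemma dec_bij k N : bijective (@dec k N).
Proof.
apply: inj_card_bij; first exact: dec_inj.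
by rewrite card_ffun !card_ord.
Qed.

Lemma Phi_entry (R : pzRingType) n k (i : 'I_n) a col :
  Phi R k.+1 i a col = (a == dec col i)%:R.
Proof.
rewrite /Phi castmxE /kron !mxE /=.
rewrite mul1r mulr1; congr ((_ : bool)%:R).
by rewrite -val_eqE /= !ffunE /= divn1 modn_small.
Qed.

Lemma prod_ind (R : comPzRingType) N K (f g : profile N K) :
  \prod_(j < N) ((f j == g j)%:R : R) = (f == g)%:R.
Proof.
have [->|E] := eqVneq f g; first by rewrite big1 // => j _; rewrite eqxx.
have : ~~ [forall j, f j == g j].
  apply/negP => /forallP H; move/eqP: E; apply; apply/ffunP => j; exact/eqP.
rewrite negb_forall => /existsP [j Hj].
by rewrite (bigD1 j) //= (negbTE Hj) mul0r.
Qed.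

Lemma Tmat_entry (R : comPzRingType) n k (s : 'S_n) r col :
  Tmat R k.+1 s r col = (dec r == perm_profile s (dec col))%:R.
Proof.
rewrite /Tmat KRentry -prod_ind; apply: eq_bigr => j _.
rewrite Phi_entry !ffunE. reflexivity. Qed.

Lemma kp_entry (R : comPzRingType) n k (x : profile n k.+1) r :
  kron_profile R x r 0 = (dec r == x)%:R.
Proof.
rewrite /kron_profile KRentry -prod_ind; apply: eq_bigr => j _.
by rewrite mxE.
Qed.

Lemma Vi_entry (R : comPzRingType) n k (c : game R n k.+1) i r :
  Vi c i 0 r = c i (dec r).
Proof.
rewrite /Vi summxE (bigD1 (dec r)) //= big1 ?addr0.
  by rewrite !mxE kp_entry eqxx mulr1.
by move=> x /negbTE Hx; rewrite !mxE kp_entry eq_sym Hx mulr0.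
Qed.

Lemma mkidx_proof n d (i : 'I_n) (m : 'I_d) : (i * d + m < n * d)%N.
Proof.
apply: (@leq_trans (i.+1 * d)); first by rewrite mulSn addnC ltn_add2r.
by rewrite leq_mul2r ltn_ord orbT.
Qed.

Definition mkidx n d (i : 'I_n) (m : 'I_d) : 'I_(n * d) := Ordinal (mkidx_proof i m).

Lemma divord_mk n d (i : 'I_n) (m : 'I_d) : divord (mkidx i m) = i.
Proof.
apply/val_inj => /=; rewrite divnMDl ?divn_small ?addn0 //.
by case: d m {i} => [[]|].
Qed.

Lemma modord_mk n d (i : 'I_n) (m : 'I_d) : modord (mkidx i m) = m.
Proof. by apply/val_inj => /=; rewrite modnMDl modn_small. Qed.

Lemma idx_eq n d (r r' : 'I_(n * d)) :
  divord r = divord r' -> modord r = modord r' -> r = r'.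
Proof.
move=> /(congr1 val) /= h1 /(congr1 val) /= h2; apply/val_inj.
by rewrite /= (divn_eq r d) (divn_eq r' d) h1 h2.
Qed.

Lemma key (R : comPzRingType) n k (c : game R n k.+1) (s : 'S_n) col :
  (VG c *m kron (Pmat R s) (sgn R s *: Tmat R k.+1 s)) 0 col =
  sgn R s * c (s (divord col)) (perm_profile s (dec (modord col))).
Proof.
case: (dec_bij k n) => g gK Kg.
set j := divord col; set y := perm_profile s (dec (modord col)).
set r0 := mkidx (s j) (g y).
rewrite mxE (bigD1 r0) //= big1 ?addr0.
  rewrite !mxE Vi_entry Tmat_entry divord_mk modord_mk Kg !eqxx.
  by rewrite mul1r mulr1 mulrC.
move=> r Hr; rewrite !mxE Tmat_entry -/j -/y.
case: eqP => [e1|_]; last by rewrite mul0r mulr0.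
case: eqP => [e2|_]; last by rewrite !mulr0.
exfalso; move/negP: Hr; apply; apply/eqP; apply: idx_eq.
  by rewrite divord_mk.
by rewrite modord_mk -e2 gK.
Qed.

Theorem theorem3p17 (R : realFieldType) (n k : nat) (hn : (2 <= n)%N) (hk : (1 <= k)%N)
  (c : game R n k) :
  skew_symmetric c <->
  (forall s : 'S_n, VG c = VG c *m kron (Pmat R s) (sgn R s *: Tmat R k s)).
Proof.
case: k hk c => // k _ c; split.
  move=> H s; apply/rowP => col.
  by rewrite key !mxE Vi_entry -H.
move=> H s i x.
case: (dec_bij k n) => g gK Kg.
have := congr1 (fun v : 'rV_ _ => v 0 (mkidx i (g x))) (H s).
by rewrite /= key !mxE Vi_entry divord_mk modord_mk Kg.
Qed.
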